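(* Let $q(x)=\limsup_{T\to\infty}\mathbb E^x\{\int_0^T(f(X_s)-\mu(f))ds\}$. Assume (C1) $q$ is continuous and bounded from below; (C2) for every bounded stopping time $\sigma$ and every $x\in E$, $q(x)=\mathbb E^x\{\int_0^\sigma(f(X_s)-\mu(f))ds+q(X_\sigma)\}$; (C3) $\mu(f)<0$. Then for any choice of $d(x)\in(\mu(f),0)$, $x\in E$, $$\gamma(x)=\sup_\tau\limsup_{T\to\infty}\mathbb E^x\Big\{\int_0^{\tau\wedge T}\big(f(X_s)-d(x)\big)ds\Big\}<\infty,$$ and moreover $\gamma(x)\le q(x)-A$, where $A=\inf_y q(y)$.
   Context: $E$ is a locally compact separable metric space in which every closed ball is compact. $(X_t)$ is a right-continuous time-homogeneous (standard) Markov process on $E$ with laws $\mathbb P^x$, expectations $\mathbb E^x$, satisfying the weak Feller property and ergodicity: there is a unique probability measure $\mu$ with $\|P_t(x,\cdot)-\mu\|_{TV}\to0$ for all $x$, where $P_t(x,\cdot)$ are the transition probabilities; $\mu(f)=\int f\,d\mu$. $f,g$ are continuous and bounded. Stopping times may be infinite. *)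

(* Defs.v *)
From HB Require Import structures.
From mathcomp Require Import all_boot all_order all_algebra.
From mathcomp Require Import all_classical all_reals all_analysis.
Set Implicit Arguments. Unset Strict Implicit. Unset Printing Implicit Defensive.
Import Order.TTheory GRing.Theory Num.Theory.
Import numFieldNormedType.Exports.
Local Open Scope classical_set_scope.
Local Open Scope ring_scope.
Local Open Scope ereal_scope.

(* Metric spaces with a distinguished point (needed because measurable types
   are pointed in MathComp-Analysis; the point plays no role). *)
#[short(type="pmetricType")]
HB.structure Definition PointedMetric (K : numDomainType) :=
  { M of Pointed M & Metric K M }.

Definition Borel (E : ptopologicalType) := g_sigma_algebraType (@open E).

Definition nice_space (R : realType) (E : pmetricType R) : Prop :=
  locally_compact [set: E] /\
  (exists D : set E, countable D /\ closure D = [set: E]) /\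
  (forall (x : E) (r : R), (0 < r)%R -> compact [set y | (mdist x y <= r)%R]).

Definition filtration (R : realType) d (Omega : measurableType d)
  (F : R -> set (set Omega)) : Prop :=
  (forall t, sigma_algebra [set: Omega] (F t)) /\
  (forall t, F t `<=` measurable) /\
  (forall s t, (0 <= s)%R -> (s <= t)%R -> F s `<=` F t).

Definition stopping_time (R : realType) d (Omega : measurableType d)
  (F : R -> set (set Omega)) (tau : Omega -> \bar R) : Prop :=
  (forall w, 0 <= tau w) /\
  (forall t : R, (0 <= t)%R -> F t [set w | tau w <= t%:E]).

Definition bounded_stopping_time (R : realType) d (Omega : measurableType d)
  (F : R -> set (set Omega)) (tau : Omega -> \bar R) : Prop :=
  stopping_time F tau /\ exists M : R, forall w, tau w <= M%:E.

Definition transition (R : realType) d (Omega : measurableType d)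
  (E : pmetricType R) (P : E -> probability Omega R) (X : R -> Omega -> Borel E)
  (t : R) (x : E) (B : set E) : \bar R :=
  P x (X t @^-1` B).

Definition feller_ergodic_markov (R : realType) d (Omega : measurableType d)
  (E : pmetricType R) (F : R -> set (set Omega))
  (P : E -> probability Omega R) (X : R -> Omega -> Borel E)
  (mu : probability (Borel E) R) : Prop :=
  filtration F /\
  (forall t (B : set (Borel E)), (0 <= t)%R -> measurable B -> F t (X t @^-1` B)) /\
  measurable_fun [set: (R * Omega)%type] (fun p : R * Omega => X p.1 p.2) /\
  (forall w t, (0 <= t)%R -> (fun s => X s w : E) @ t^'+ --> (X t w : E)) /\
  (forall x : E, P x (X 0%R @^-1` [set x]) = 1) /\
  (* (simple) Markov property, time-homogeneous *)
  (forall (x : E) (s t : R) (A : set Omega) (B : set (Borel E)),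
      (0 <= s)%R -> (0 <= t)%R -> F t A -> measurable B ->
      P x (A `&` X (t + s)%R @^-1` B) =
      \int[P x]_(w in A) transition P X s (X t w) B) /\
  (forall (t : R) (g : E -> R), (0 <= t)%R -> continuous g ->
      (exists M : R, forall y, (`|g y| <= M)%R) ->
      continuous (fun x : E => \int[P x]_w (g (X t w))%:E)) /\
  (* ergodicity: total variation convergence to mu *)
  (forall x : E,
      (fun t : R => ereal_sup [set `|transition P X t x B - mu B|
                                | B in (measurable : set (set (Borel E)))])
        @ +oo%R --> (0 : \bar R)).

Definition path_integral (R : realType) d (Omega : measurableType d)
  (E : pmetricType R) (X : R -> Omega -> Borel E) (f : E -> R) (c : R)
  (S : set R) (w : Omega) : \bar R :=
  \int[lebesgue_measure]_(s in S) (f (X s w) - c)%:E.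

Definition q_fun (R : realType) d (Omega : measurableType d)
  (E : pmetricType R) (P : E -> probability Omega R) (X : R -> Omega -> Borel E)
  (f : E -> R) (muf : R) (x : E) : \bar R :=
  limf_esup (fun T : R =>
    \int[P x]_w path_integral X f muf [set s | (0 <= s)%R /\ (s <= T)%R] w)
    +oo%R.

Definition gamma_fun (R : realType) d (Omega : measurableType d)
  (E : pmetricType R) (F : R -> set (set Omega))
  (P : E -> probability Omega R) (X : R -> Omega -> Borel E)
  (f : E -> R) (dd : E -> R) (x : E) : \bar R :=
  ereal_sup [set limf_esup (fun T : R =>
      \int[P x]_w path_integral X f (dd x)
         [set s | (0 <= s)%R /\ s%:E <= tau w /\ (s <= T)%R] w) +oo%R
    | tau in [set tau : Omega -> \bar R | stopping_time F tau]].

(* Main.v *)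
Require Import Defs.
From HB Require Import structures.
From mathcomp Require Import all_boot all_order all_algebra.
From mathcomp Require Import all_classical all_reals all_analysis.
From mathcomp Require Import measurable_realfun.
Import Order.TTheory GRing.Theory Num.Theory.
Import numFieldNormedType.Exports.
Local Open Scope classical_set_scope.
Local Open Scope ring_scope.
Section Aux.
Local Open Scope ereal_scope.
Context d (T : measurableType d) (R : realType) (mu : {measure set T -> \bar R}).

Lemma nn_le_int (D : set T) (f g : T -> \bar R) :
  (forall x, D x -> 0 <= f x) -> (forall x, D x -> f x <= g x) ->
  \int[mu]_(x in D) f x <= \int[mu]_(x in D) g x.
Proof.
move=> f0 fg.
have g0 : forall x, D x -> 0 <= g x.
  by move=> x Dx; exact: le_trans (f0 _ Dx) (fg _ Dx).
rewrite (ge0_integralE mu f0) (ge0_integralE mu g0).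
apply: ereal_sup_le => _ [h hf <-]; exists h => //= x.
apply: le_trans (hf x) _; rewrite /patch; case: ifPn => // /[!inE] Dx; exact: fg.
Qed.

Lemma gen_le_int (D : set T) (f g : T -> \bar R) :
  (forall x, D x -> f x <= g x) ->
  \int[mu]_(x in D) f x <= \int[mu]_(x in D) g x.
Proof.
move=> fg; rewrite (integralE _ _ f) (integralE _ _ g).
have fg' : {in D, forall x, f x <= g x} by move=> x /[!inE]; exact: fg.
apply: leeB; apply: nn_le_int => x Dx.
- exact: funepos_ge0.
- by apply: (funepos_le fg'); rewrite inE.
- exact: funeneg_ge0.
- by apply: (funeneg_le fg'); rewrite inE.
Qed.
End Aux.

Lemma limf_esup_le (R : realType) (h : R -> \bar R) (c : \bar R) :
  (forall T, (0 < T)%R -> (h T <= c)%E) -> (limf_esup h +oo%R <= c)%E.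
Proof.
move=> hc; rewrite /limf_esup.
apply: le_trans (ereal_inf_lbound _) _.
  exists [set T | (0 < T)%R] => //.
  by exists 0%R; split => // x /=.
by apply: ge_ereal_sup => _ [T T0 <-]; exact: hc.
Qed.
Lemma stopping_measurable (R : realType) d (Omega : measurableType d)
  (F : R -> set (set Omega)) (tau : Omega -> \bar R) :
  (forall t, F t `<=` measurable) -> stopping_time F tau ->
  measurable_fun setT (tau : Omega -> \bar R).
Proof.
move=> Fm [t0 tF].
have le_m (r : R) : measurable [set w | (tau w <= r%:E)%E].
  have [r0|r0] := leP 0%R r; first exact: Fm (tF r r0).
  rewrite (_ : [set _ | _] = set0) //; apply/seteqP; split => // w /= h.
  by have := le_trans (t0 w) h; rewrite lee_fin leNgt r0.
have lt_m (r : R) : measurable [set w | (tau w < r%:E)%E].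
  rewrite (_ : [set _ | _] = \bigcup_n [set w | (tau w <= (r - n.+1%:R^-1)%:E)%E]).
    by apply: bigcupT_measurable => n; exact: le_m.
  apply/seteqP; split => w /=.
  - move=> h; have : tau w \is a fin_num.
      by rewrite ge0_fin_numE ?(t0 w) // (lt_le_trans h) ?leey.
    move/fineK => tE; rewrite -tE lte_fin in h.
    have [k hk] := ltr_add_invr h; exists k => //=.
    by rewrite -tE lee_fin lerBrDr ltW.
  - move=> [n _ /= h]; apply: le_lt_trans h _.
    by rewrite lte_fin ltrBlDr ltrDl invr_gt0 ltr0Sn.
move=> _; apply: (measurability _ (ErealGenCInfty.measurableE R)) => //.
move=> _ [_ [r ->] <-]; rewrite setTI.
rewrite (_ : tau @^-1` _ = ~` [set w | (tau w < r%:E)%E]); first exact/measurableC/lt_m.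
apply/seteqP; split => w /=; rewrite in_itv /= andbT leNgt.
  by move/negP.
by move/negP.
Qed.

Lemma cont_meas (R : realType) (E : pmetricType R) (f : E -> R) :
  continuous f -> measurable_fun setT (f : Borel E -> R).
Proof.
move=> cf _; apply: (measurability _ (RGenOInfty.measurableE R)) => //.
move=> _ [_ [x ->] <-]; rewrite setTI; apply: sub_sigma_algebra.
exact: (proj1 (continuousP f)) cf _ (rray_open x).
Qed.
Section PathInt.
Context (R : realType) d (Omega : measurableType d) (E : pmetricType R)
  (X : R -> Omega -> Borel E) (f : E -> R) (c : R) (tau : Omega -> \bar R) (T : R).
Hypothesis Xm : measurable_fun [set: (R * Omega)%type] (fun p : R * Omega => X p.1 p.2).
Hypothesis fc : continuous f.
Hypothesis taum : measurable_fun setT (tau : Omega -> \bar R).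

Lemma path_meas : measurable_fun setT (fun w => path_integral X f c
   [set s | (0 <= s)%R /\ (s%:E <= tau w)%E /\ (s <= T)%R] w).
Proof.
pose Sj := [set p : R * Omega | (0 <= p.1)%R /\ (p.1%:E <= tau p.2)%E /\ (p.1 <= T)%R].
pose psi := fun p : R * Omega => (f (X p.1 p.2) - c)%:E.
pose phi := psi \_ Sj.
have mSj : measurable Sj.
  rewrite (_ : Sj = (`[0%R, T]%classic `*` setT) `&` (setT `&` [set p | ((p.1)%:E <= tau p.2)%E])).
    apply: measurableI; first by apply: measurableX => //; exact: measurable_itv.
    apply: measurable_lee => //.
      have h1 := (@measurable_fst _ _ R Omega).
      have h2 := (@EFin_measurable R setT).
      have h3 := measurableT_comp h2 h1.
      exact: h3.
    have h4 := (@measurable_snd _ _ R Omega).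
    exact: (measurableT_comp taum h4).
  apply/seteqP; split => -[s w] /=.
    by move=> [s0 [st sT]]; rewrite in_itv /= s0 sT.
  by rewrite in_itv /= => -[[/andP[s0 sT] _] [_ st]].
have mpsi : measurable_fun setT psi.
  apply/measurable_EFinP; apply: measurable_funB => //.
  have h5 := measurableT_comp (@cont_meas R E f fc) Xm.
  exact: h5.
have mphi : measurable_fun setT phi.
  by apply/(measurable_restrictT _ _).1 => //; exact: measurable_funS mpsi.
rewrite (_ : (fun w => _) = fun w => (fubini_G lebesgue_measure phi^\+ w - fubini_G lebesgue_measure phi^\- w)%E).
  apply: emeasurable_funB; apply: measurable_fun_fubini_tonelli_G.
  - exact: measurable_funepos.
  - by move=> p; exact: funepos_ge0.
  - exact: measurable_funeneg.
  - by move=> p; exact: funeneg_ge0.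
apply/funext => w; rewrite /path_integral integral_mkcond /fubini_G.
have -> : ((fun s => (f (X s w) - c)%:E) \_ [set s | (0 <= s)%R /\ (s%:E <= tau w)%E /\ (s <= T)%R])
   = fun s => phi (s, w).
  by apply/funext => s; rewrite /phi /patch /psi /=.
rewrite integralE; rewrite !unlock; reflexivity.
Qed.
End PathInt.
Lemma abse_le_helper (R : realDomainType) (x : \bar R) (a : R) :
  ((- a)%:E <= x)%E -> (x <= a%:E)%E -> (`|x| <= a%:E)%E.
Proof.
case: x => [r| |] //=.
by rewrite !lee_fin => h1 h2; rewrite ler_norml h1 h2.
Qed.

Lemma path_bound (R : realType) d (Omega : measurableType d) (E : pmetricType R)
  (X : R -> Omega -> Borel E) (f : E -> R) (c : R) (S : set R) (T M : R) (w : Omega) :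
  (0 <= T)%R -> (forall y, `|f y| <= M)%R -> S `<=` `[0%R, T]%classic ->
  (`| path_integral X f c S w | <= ((M + `|c|) * T)%:E)%E.
Proof.
move=> T0 fM ST.
have K0 : (0 <= M + `|c|)%R.
  by apply: addr_ge0 => //; exact: le_trans (normr_ge0 _) (fM point).
have fK s : (`|f (X s w) - c| <= M + `|c|)%R.
  by apply: le_trans (ler_normB _ _) _; rewrite lerD2r.
have cstE (k : R) : (\int[lebesgue_measure]_x ((cst k%:E) \_ `[0%R, T]%classic) x = (k * T)%:E)%E.
  rewrite -integral_mkcond integral_cst; last exact: measurable_itv.
  have L : lebesgue_measure (`[0%R, T]%classic : set R) = T%:E.
    rewrite lebesgue_measure_itv /= lte_fin; case: ltgtP T0 => // [T0' _|<- _].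
      by rewrite oppr0 adde0.
    by [].
  rewrite EFinM; congr (_ * _)%E; exact: L.
rewrite /path_integral integral_mkcond; apply: abse_le_helper.
- rewrite -mulNr -cstE; apply: gen_le_int => s _; rewrite /patch.
  case: ifPn => sI; case: ifPn => sS //.
  + by rewrite lee_fin; have := fK s; rewrite ler_norml => /andP[].
  + by rewrite /= lee_fin oppr_le0.
  + by exfalso; move/negP: sI; apply; rewrite in_setE; apply: ST; rewrite -in_setE.
- rewrite -cstE; apply: gen_le_int => s _; rewrite /patch.
  case: ifPn => sS; case: ifPn => sI //.
  + by rewrite lee_fin; have := fK s; rewrite ler_norml => /andP[].
  + by exfalso; move/negP: sI; apply; rewrite in_setE; apply: ST; rewrite -in_setE.
Qed.
Lemma shift_le d (T : measurableType d) (R : realType) (P : probability T R)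
  (g h : T -> \bar R) (a K : R) :
  measurable_fun setT g -> (forall w, (`|g w| <= K%:E)%E) ->
  (forall w, (g w + a%:E <= h w)%E) ->
  (\int[P]_w g w <= \int[P]_w h w - a%:E)%E.
Proof.
move=> mg gK gh.
have P1 : (P : {measure set T -> \bar R}) setT = 1%E by exact: probability_setT.
have ig : P.-integrable setT g.
  apply/integrableP; split => //.
  apply: le_lt_trans (@gen_le_int _ _ _ P setT _ (cst K%:E) _) _.
    by move=> w _; exact: gK.
  by rewrite integral_cst // P1 mule1 ltry.
have ia : P.-integrable setT (EFin \o cst a) by exact: finite_measure_integrable_cst.
rewrite leeBrDr //.
have E1 : (\int[P]_w (g w + (EFin \o cst a) w) = \int[P]_w g w + a%:E)%E.
  rewrite integralD //; congr (_ + _)%E.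
  transitivity (\int[P]_(w in setT) (cst a%:E) w)%E; first by [].
  by rewrite integral_cst // P1 mule1.
rewrite -E1; apply: gen_le_int => w _; exact: gh.
Qed.
Theorem lemma2p17 (R : realType) (dO : measure_display) (Omega : measurableType dO)
  (E : pmetricType R) (F : R -> set (set Omega))
  (P : E -> probability Omega R) (X : R -> Omega -> Borel E)
  (mu : probability (Borel E) R) (f : E -> R) :
  nice_space E ->
  feller_ergodic_markov F P X mu ->
  continuous f -> (exists M : R, forall y, `|f y| <= M) ->
  let muf : R := Rintegral mu [set: Borel E] f in
  let q : E -> \bar R := q_fun P X f muf in
  (* (C1) q is (finite,) continuous and bounded from below *)
  (forall x, q x \is a fin_num) ->
  continuous (fun x => fine (q x)) ->
  (exists A0 : R, forall x, (A0%:E <= q x)%E) ->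
  (* (C2) *)
  (forall (sigma : Omega -> \bar R) (x : E),
     bounded_stopping_time F sigma ->
     q x = (\int[P x]_w
              (path_integral X f muf [set s : R | (0 <= s)%R /\ (s%:E <= sigma w)%E] w
               + q (X (fine (sigma w)) w)))%E) ->
  (* (C3) *)
  muf < 0 ->
  forall dd : E -> R, (forall x, muf < dd x < 0) ->
  forall x : E,
    (gamma_fun F P X f dd x < +oo)%E /\
    (gamma_fun F P X f dd x <= q x - ereal_inf (range q))%E.
Proof.
move=> _ [[Fsa [Fm _]] [_ [Xm _]]] fc [M fM] muf q qfin _ [A0 hA0] C2 _ dd hdd x.
set A := ereal_inf (range q).
have Aq y : (A <= q y)%E by apply: ereal_inf_lbound; exists y.
have A0A : (A0%:E <= A)%E by apply: le_ereal_inf_tmp => _ [y _ <-]; exact: hA0.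
have Afin : A \is a fin_num.
  rewrite fin_numElt; apply/andP; split.
    exact: lt_le_trans (ltNyr A0) A0A.
  by apply: le_lt_trans (Aq x) _; rewrite ltey_eq qfin.
have key : (gamma_fun F P X f dd x <= q x - A)%E.
  apply: ge_ereal_sup => _ [tau st <-].
  apply: limf_esup_le => T T0.
  pose sigma := fun w => Order.min (tau w) T%:E.
  have bs : bounded_stopping_time F sigma.
    split; [split|exists T].
    - by move=> w; rewrite /sigma le_min (st.1 w) lee_fin ltW.
    - move=> t t0; have [Tt|tT] := leP T t.
      + rewrite (_ : [set w | _] = setT).
          by case: (Fsa t) => H0 HC _; move: (HC _ H0); rewrite setD0.
        by apply/seteqP; split => // w _ /=; rewrite /sigma ge_min lee_fin Tt orbT.
      + rewrite (_ : [set w | _] = [set w | (tau w <= t%:E)%E]); first exact: st.2.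
        apply/seteqP; split => w /=; by rewrite /sigma ge_min lee_fin (leNgt T t) tT orbF.
    - by move=> w; rewrite /sigma ge_min lexx orbT.
  have eqS w : [set s : R | (0 <= s)%R /\ (s%:E <= sigma w)%E] =
               [set s | (0 <= s)%R /\ (s%:E <= tau w)%E /\ (s <= T)%R].
    apply/seteqP; split => s /=; rewrite /sigma le_min lee_fin.
      by move=> [s0 /andP[]].
    by move=> [s0 [-> ->]].
  rewrite (C2 sigma x bs) -(fineK Afin).
  apply: (@shift_le _ _ _ (P x) _ _ (fine A) ((M + `|dd x|) * T)).
  - exact: (@path_meas _ _ _ _ X f (dd x) tau T Xm fc (@stopping_measurable _ _ _ F tau Fm st)).
  - move=> w; apply: path_bound => //; first exact: ltW.
    by move=> s [s0 [_ sT]]; rewrite /= in_itv /= s0 sT.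
  - move=> w; rewrite fineK //; apply: leeD; last exact: Aq.
    rewrite eqS; apply: gen_le_int => s _; rewrite lee_fin lerD2l lerN2.
    by case/andP: (hdd x) => /ltW.
split => //; apply: le_lt_trans key _.
by rewrite ltey_eq fin_numB qfin Afin.
Qed.
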